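(* If $G$ and $H$ are connected graphs, then $\chi_{\mu_2}(G\,\square\, H)\ge \max\{\chi_{\mu_2}(G)\rho_2(H),\ \chi_{\mu_2}(H)\rho_2(G)\}$, and this bound is sharp.
   Context: The Cartesian product $G\,\square\, H$ has vertex set $V(G)\times V(H)$, with $(g,h)$ adjacent to $(g',h')$ iff either $g=g'$ and $hh'\in E(H)$, or $gg'\in E(G)$ and $h=h'$. A set $S\subseteq V(G)$ is a $2$-packing if $N_G[u]\cap N_G[v]=\emptyset$ for all distinct $u,v\in S$ (closed neighborhoods); $\rho_2(G)$ is the maximum size of a $2$-packing. A set $M\subseteq V(X)$ is a $2$-distance mutual-visibility set if for every two vertices $u,v\in M$ there exists a shortest $u,v$-path of length at most $2$ none of whose internal vertices lies in $M$. $\chi_{\mu_2}(X)$ is the minimum cardinality of a partition of $V(X)$ into $2$-distance mutual-visibility sets. *)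

(* Defs.v *)
From mathcomp Require Import all_boot.
Set Implicit Arguments. Unset Strict Implicit. Unset Printing Implicit Defensive.

Record sgraph := SGraph {
  vert :> finType;
  adj : rel vert;
  adj_sym : symmetric adj;
  adj_irr : irreflexive adj }.

Definition connected (G : sgraph) : Prop := forall x y : G, connect (@adj G) x y.

Definition cart_adj (G H : sgraph) : rel (prod (vert G) (vert H)) :=
  fun x y => ((x.1 == y.1) && adj x.2 y.2) || (adj x.1 y.1 && (x.2 == y.2)).

Lemma cart_adj_sym G H : symmetric (@cart_adj G H).
Proof.
move=> [g h] [g' h']; rewrite /cart_adj /= (eq_sym g) (eq_sym h).
by rewrite (adj_sym h) (adj_sym g).
Qed.

Lemma cart_adj_irr G H : irreflexive (@cart_adj G H).
Proof. by move=> [g h]; rewrite /cart_adj /= !adj_irr !andbF andFb. Qed.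

Definition cartesian (G H : sgraph) : sgraph :=
  SGraph (@cart_adj_sym G H) (@cart_adj_irr G H).

Definition closed_nbhd (G : sgraph) (u : G) : {set G} :=
  [set x | (x == u) || adj u x].

Definition two_packing (G : sgraph) (S : {set G}) : bool :=
  [forall u in S, forall v in S,
     (u != v) ==> [disjoint closed_nbhd u & closed_nbhd v]].

Definition rho2 (G : sgraph) : nat :=
  \max_(S : {set G} | two_packing S) #|S|.

(* 2-distance mutual-visibility set: for distinct u, v in M there is a
   shortest u,v-path of length <= 2 with no internal vertex in M, i.e.
   u, v adjacent, or non-adjacent with a common neighbour outside M. *)
Definition dmv2 (G : sgraph) (M : {set G}) : bool :=
  [forall u in M, forall v in M, (u != v) ==>
     (adj u v || [exists w, (w \notin M) && adj u w && adj w v])].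

(* V(G) can be partitioned into (at most) k 2-distance mutual-visibility
   sets: a colouring with k colours whose classes are all dmv2 sets
   (empty classes allowed, which does not change the minimum). *)
Definition dmv2_colorable (G : sgraph) (k : nat) : bool :=
  [exists f : {ffun G -> 'I_k}, forall i : 'I_k, dmv2 [set x | f x == i]].

Lemma dmv2_colorable_ex (G : sgraph) : exists k, dmv2_colorable G k.
Proof.
exists #|G|; apply/existsP; exists [ffun x => enum_rank x].
apply/forallP => i; apply/forallP => u; apply/implyP => Hu.
apply/forallP => v; apply/implyP => Hv; apply/implyP => Huv.
rewrite !inE !ffunE in Hu Hv.
have E : u = v by apply: enum_rank_inj; rewrite (eqP Hu) (eqP Hv).
by rewrite E eqxx in Huv.
Qed.

Definition chi_mu2 (G : sgraph) : nat := ex_minn (dmv2_colorable_ex G).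

(* Main.v *)
Require Import Defs.
From mathcomp Require Import all_boot.
Set Implicit Arguments. Unset Strict Implicit. Unset Printing Implicit Defensive.

Lemma chi_min (G : sgraph) k : dmv2_colorable G k -> chi_mu2 G <= k.
Proof. rewrite /chi_mu2; case: ex_minnP => m _; exact. Qed.

Lemma chi_col (G : sgraph) : dmv2_colorable G (chi_mu2 G).
Proof. by rewrite /chi_mu2; case: ex_minnP. Qed.

Lemma nb_l (G H : sgraph) (g a : G) (h b : H) :
  cart_adj (g, h) (a, b) -> b \in closed_nbhd h.
Proof.
rewrite /cart_adj /closed_nbhd inE /= => /orP[/andP[_ ->]|/andP[_ /eqP->]];
  by rewrite ?eqxx ?orbT.
Qed.

Lemma nb_r (G H : sgraph) (g a : G) (h b : H) :
  cart_adj (a, b) (g, h) -> b \in closed_nbhd h.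
Proof. by rewrite cart_adj_sym; apply: nb_l. Qed.

Lemma layer_chi (G H : sgraph) k (f : {ffun cartesian G H -> 'I_k})
  (Hf : forall i, dmv2 [set x | f x == i]) (h : H) :
  chi_mu2 G <= #|[set f (g, h) | g : G]|.
Proof.
set C := [set f (g, h) | g : G].
have Cm : forall g, f (g, h) \in C by move=> g; apply: imset_f.
apply: chi_min; apply/existsP.
exists [ffun g => enum_rank_in (Cm g) (f (g, h))].
apply/forallP => i; apply/forallP => u; apply/implyP; rewrite inE ffunE => /eqP Hu.
apply/forallP => v; apply/implyP; rewrite inE ffunE => /eqP Hv; apply/implyP => uv.
have Eu : f (u, h) = enum_val i by rewrite -Hu enum_rankK_in.
have Ev : f (v, h) = enum_val i by rewrite -Hv enum_rankK_in.
have uvp : (u, h) != (v, h) by rewrite xpair_eqE (negbTE uv).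
move: (Hf (f (u, h))) => /forallP /(_ (u, h)) /implyP; rewrite inE eqxx => /(_ isT).
move=> /forallP /(_ (v, h)) /implyP; rewrite inE Eu Ev eqxx => /(_ isT) /implyP /(_ uvp).
case/orP => [|/existsP [[a b] /andP [/andP [wM a1] a2]]].
  by rewrite /= /cart_adj /= eqxx adj_irr /= andbF andbT /= => ->.
case: (eqVneq b h) => [Ebh | bh].
  move: a1 a2 wM; rewrite Ebh /= /cart_adj /= !adj_irr !andbF /= !eqxx !andbT => a1 a2 wM.
  apply/orP; right; apply/existsP; exists a; rewrite inE ffunE a1 a2 !andbT.
  by apply/negP => /eqP E; move: wM; rewrite -E enum_rankK_in // inE eqxx.
move: a1 a2; rewrite /= /cart_adj /=.

rewrite (eq_sym h) (negbTE bh) !andbF !orbF.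
by case/andP => /eqP <- _ /andP [/eqP ua _]; rewrite ua eqxx in uv.
Qed.

Lemma layer_bound (G H : sgraph) k (f : {ffun cartesian G H -> 'I_k})
  (Hf : forall i, dmv2 [set x | f x == i]) (S : {set H}) :
  two_packing S -> chi_mu2 G * #|S| <= k.
Proof.
move=> HS.
pose C h := [set f (g, h) | g : G].
have disj : forall h h', h \in S -> h' \in S -> h != h' ->
    forall i, i \in C h -> i \in C h' -> False.
  move=> h h' hS h'S hh i /imsetP [g _ Ei] /imsetP [g' _ Ei'].
  move/forallP: HS => /(_ h) /implyP /(_ hS) /forallP /(_ h') /implyP /(_ h'S)
    /implyP /(_ hh) Hd.
  have Hb : forall b, b \in closed_nbhd h -> b \in closed_nbhd h' -> False.
    move=> b b1 b2.
    have : b \in closed_nbhd h :&: closed_nbhd h' by rewrite inE b1 b2.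
    by rewrite (disjoint_setI0 Hd) inE.
  have uvp : (g, h) != (g', h') by rewrite xpair_eqE (negbTE hh) andbF.
  move: (Hf i) => /forallP /(_ (g, h)) /implyP; rewrite inE -Ei eqxx => /(_ isT).
  move=> /forallP /(_ (g', h')) /implyP; rewrite inE -Ei' eqxx => /(_ isT) /implyP /(_ uvp).
  case/orP => [Ha|/existsP [[a b] /andP [/andP [_ a1] a2]]].
    apply: (Hb h'); first exact: (nb_l Ha).
    by rewrite inE eqxx.
  exact: (Hb b (nb_l a1) (nb_r a2)).
have Hc : forall h, chi_mu2 G <= #|C h| by move=> h; apply: layer_chi.
apply: (@leq_trans (\sum_(h in S) #|C h|)).
  by rewrite mulnC -sum_nat_const; apply: leq_sum => h _.
have -> : \sum_(h in S) #|C h| = \sum_(h in S) \sum_(i < k) (i \in C h : nat).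
  apply: eq_bigr => h _; rewrite -sum1_card big_mkcond /=.
  by apply: eq_bigr => i _; case: (i \in C h).
rewrite exchange_big /=.
apply: (@leq_trans (\sum_(i < k) 1)); last by rewrite sum1_card card_ord.
apply: leq_sum => i _.
rewrite (_ : \sum_(h in S) (i \in C h : nat) = \sum_(h | (h \in S) && (i \in C h)) 1).
  rewrite sum1dep_card; apply/card_le1_eqP => h h'; rewrite !inE.
  case/andP => hS hi; case/andP => h'S h'i.
  apply/eqP; apply/negPn/negP => hh.
  by rewrite eq_sym in hh; exact: (disj h h' hS h'S hh i hi h'i).
rewrite big_mkcondr /=; apply: eq_bigr => h _; by case: (i \in C h).
Qed.

Lemma swap_col (G H : sgraph) k :
  dmv2_colorable (cartesian G H) k -> dmv2_colorable (cartesian H G) k.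
Proof.
case/existsP => f Hf; apply/existsP.
exists [ffun x : cartesian H G => f (x.2, x.1)].
apply/forallP => i; move/forallP: Hf => /(_ i) Hi.
apply/forallP => -[a b]; apply/implyP; rewrite inE ffunE /= => Hu.
apply/forallP => -[c d]; apply/implyP; rewrite inE ffunE /= => Hv.
apply/implyP => uv.
move/forallP: Hi => /(_ (b, a)) /implyP; rewrite inE Hu => /(_ isT).
move=> /forallP /(_ (d, c)) /implyP; rewrite inE Hv => /(_ isT) /implyP.
have uvp : (b, a) != (d, c) by move: uv; rewrite !xpair_eqE andbC.
move=> /(_ uvp) /orP [Ha | /existsP [[w1 w2] /andP [/andP [wn w1a] w2a]]].
  apply/orP; left; move: Ha; rewrite /= /cart_adj /=.
  by case/orP => /andP [-> ->]; rewrite ?orbT.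
apply/orP; right; apply/existsP; exists (w2, w1); rewrite inE ffunE /=.
rewrite inE in wn; rewrite wn /=.
move: w1a w2a; rewrite /= /cart_adj /=.
by do 2 case/orP => /andP [-> ->]; rewrite ?orbT.
Qed.

Lemma part1 (G H : sgraph) :
  maxn (chi_mu2 G * rho2 H) (chi_mu2 H * rho2 G) <= chi_mu2 (cartesian G H).
Proof.
have gen : forall (G H : sgraph) k, dmv2_colorable (cartesian G H) k ->
    chi_mu2 G * rho2 H <= k.
  move=> G' H' k /existsP [f Hf].
  have Hf' : forall i, dmv2 [set x | f x == i] by move=> i; move/forallP: Hf.
  rewrite /rho2.
  have P0 : 0 < #|(fun S : {set H'} => two_packing S)|.
    apply/card_gt0P; exists set0; rewrite /in_mem /= /two_packing.
    by apply/forallP => u; rewrite inE.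
  have [S SP ->] := eq_bigmax_cond (fun S : {set H'} => #|S|) P0.
  exact: (layer_bound Hf').
rewrite geq_max; apply/andP; split; first exact: gen (chi_col _).
by apply: gen; apply: swap_col; apply: chi_col.
Qed.

Definition K2adj : rel bool := fun x y => x != y.
Lemma K2sym : symmetric K2adj. Proof. by move=> x y; rewrite /K2adj eq_sym. Qed.
Lemma K2irr : irreflexive K2adj. Proof. by move=> x; rewrite /K2adj eqxx. Qed.
Definition K2 := SGraph K2sym K2irr.
Definition P3adj : rel (option bool) := fun x y => (x == None) != (y == None).
Lemma P3sym : symmetric P3adj. Proof. by move=> x y; rewrite /P3adj eq_sym. Qed.
Lemma P3irr : irreflexive P3adj. Proof. by move=> x; rewrite /P3adj eqxx. Qed.
Definition P3 := SGraph P3sym P3irr.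

Lemma K2conn : connected K2.
Proof.
move=> x y; case: (eqVneq x y) => [->|xy]; first exact: connect0.
exact: connect1.
Qed.

Lemma P3conn : connected P3.
Proof.
have c0 : forall x : P3, connect (@adj P3) None x.
  case=> [b|]; last exact: connect0.
  by apply: connect1.
move=> x y; apply: (@connect_trans _ _ None); last exact: c0.
by rewrite (sym_connect_sym (@adj_sym P3)); exact: c0.
Qed.

Definition col : {ffun cartesian K2 P3 -> 'I_2} :=
  [ffun x : cartesian K2 P3 =>
     if (x.2 == None) && x.1 || (x.2 == Some true) then ord0 else ord_max].

Lemma prod_col : dmv2_colorable (cartesian K2 P3) 2.
Proof.
apply/existsP; exists col.
apply/forallP => i; apply/forallP => -[a b]; apply/implyP; rewrite inE ffunE /= => Hu.
apply/forallP => -[c d]; apply/implyP; rewrite inE ffunE /= => Hv.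
apply/implyP => neq.
case: i Hu Hv => [[|[|//]] Hi] Hu Hv;
case: a b c d Hu Hv neq => [] [[]|] [] [[]|] //= _ _ _;
try first [ by []
      | ((try (apply/orP; right)); apply/existsP;
         first [ exists (true, None); by rewrite inE /col ffunE
               | exists (false, None); by rewrite inE /col ffunE
               | exists (true, Some true); by rewrite inE /col ffunE
               | exists (false, Some true); by rewrite inE /col ffunE
               | exists (true, Some false); by rewrite inE /col ffunE
               | exists (false, Some false); by rewrite inE /col ffunE ]) ].
Qed.

Lemma P3_chi : 2 <= chi_mu2 P3.
Proof.
have := chi_col P3; case: (chi_mu2 P3) => [|[|n]] // /existsP [f Hf].
  by case: (f None).
move/forallP: Hf => /(_ ord0) /forallP /(_ (Some true)) /implyP.
rewrite inE ord1 eqxx => /(_ isT) /forallP /(_ (Some false)) /implyP.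
rewrite inE ord1 eqxx => /(_ isT) /implyP /(_ isT) /=.
by case/existsP => w; rewrite inE ord1 eqxx.
Qed.

Lemma K2_rho : 1 <= rho2 K2.
Proof.
rewrite /rho2 -(cards1 true).
apply: (@leq_bigmax_cond _ (fun S : {set K2} => two_packing S) (fun S => #|S|)).
apply/forallP => u; apply/implyP; rewrite inE => /eqP ->.
by apply/forallP => v; apply/implyP; rewrite inE => /eqP ->; rewrite eqxx.
Qed.

Lemma part2 : exists G H : sgraph, [/\ connected G, connected H,
     1 < #|vert G|, 1 < #|vert H| &
     chi_mu2 (cartesian G H) = maxn (chi_mu2 G * rho2 H) (chi_mu2 H * rho2 G)].
Proof.
exists K2, P3; split.
- exact: K2conn.
- exact: P3conn.
- by rewrite /= card_bool.
- by rewrite /= card_option card_bool.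
apply/eqP; rewrite eqn_leq part1 andbT.
apply: (leq_trans (chi_min prod_col)).
apply: (leq_trans _ (leq_maxr _ _)).
by rewrite -[2]muln1; apply: leq_mul; [exact: P3_chi | exact: K2_rho].
Qed.

Theorem theorem6p2 :
  (forall G H : sgraph, connected G -> connected H ->
     maxn (chi_mu2 G * rho2 H) (chi_mu2 H * rho2 G) <= chi_mu2 (cartesian G H))
  /\
  (exists G H : sgraph, [/\ connected G, connected H,
     1 < #|vert G|, 1 < #|vert H| &
     chi_mu2 (cartesian G H) = maxn (chi_mu2 G * rho2 H) (chi_mu2 H * rho2 G)]).
Proof.
split; last exact: part2.
by move=> G H _ _; apply: part1.
Qed.
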